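(* Let $t=\frac13$ and $p=\frac1b$ for an integer $b\ge3$. Then bold play is optimal, i.e. $\pi(p,\frac13)=1-(1-p)^3$, attained by $c_1=c_2=c_3=\frac13$, $c_i=0$ for $i\ge4$.
   Context: Let $\beta_1,\beta_2,\ldots$ be independent Bernoulli random variables with success probability $p$. A stake sequence is a sequence $\gamma=(c_1,c_2,\ldots)$ of non-negative reals with $c_1\ge c_2\ge\cdots$ and $\sum_i c_i=1$; write $S_\gamma=\sum_i c_i\beta_i$. For $0\le p\le t\le 1$ define $\pi(p,t)=\sup\{\mathbf P(S_\gamma\ge t)\mid \gamma \text{ a stake sequence}\}$. Bold play for threshold $t$ is the stake sequence with $c_i=\frac1m$ for $i\le m$ and $c_i=0$ for $i>m$, where $m=\lfloor 1/t\rfloor$; it is optimal if it attains $\pi(p,t)$. *)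

(* Defs.v *)
From HB Require Import structures.
From mathcomp Require Import all_boot all_order all_algebra.
From mathcomp Require Import all_classical all_reals all_analysis.
Set Implicit Arguments. Unset Strict Implicit. Unset Printing Implicit Defensive.
Import Order.TTheory GRing.Theory Num.Theory.
Import numFieldNormedType.Exports.
Local Open Scope classical_set_scope.
Local Open Scope ring_scope.

Definition stake_seq (R : realType) (c : nat -> R) : Prop :=
  (forall i, 0 <= c i) /\ (forall i, c i.+1 <= c i) /\ (series c @ \oo --> (1 : R)).

(* beta_1, beta_2, ... (indexed from 0 here) are independent Bernoulli(p)
   random variables with values in {0,1}: each is measurable, 0/1-valued,
   and every finite family of distinct indices has the product joint law. *)
Definition iid_bernoulli d (T : measurableType d) (R : realType)
  (P : probability T R) (beta : nat -> T -> R) (p : R) : Prop :=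
  (forall i, measurable_fun setT (beta i)) /\
  (forall i w, beta i w = 0 \/ beta i w = 1) /\
  (forall (s : seq nat) (e : nat -> bool), uniq s ->
     P [set w | forall i, i \in s -> beta i w = (e i)%:R] =
     (\prod_(i <- s) (if e i then p else 1 - p))%:E).

Definition S_gamma (R : realType) T (c : nat -> R) (beta : nat -> T -> R)
  (w : T) : R := limn (series (fun i => c i * beta i w)).

Definition pi_val d (T : measurableType d) (R : realType)
  (P : probability T R) (beta : nat -> T -> R) (t : R) : R :=
  sup [set r | exists c, stake_seq c /\
         r = fine (P [set w | t <= S_gamma c beta w])].

Definition bold_third (R : realType) (i : nat) : R :=
  if (i < 3)%N then 3^-1 else 0.

(* Main.v *)
Require Import Defs.
From HB Require Import structures.
From mathcomp Require Import all_boot all_order all_algebra.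
From mathcomp Require Import all_classical all_reals all_analysis.
From mathcomp Require Import lra ring.
Import Order.TTheory GRing.Theory Num.Theory.
Import numFieldNormedType.Exports.
Local Open Scope classical_set_scope.
Local Open Scope ring_scope.
Section Comb.
Context {R : realType}.

Definition ind (t x : R) : R := if t <= x then 1 else 0.

Fixpoint Pr (p t : R) (l : seq R) (s : R) : R :=
  match l with
  | [::] => ind t s
  | c :: l' => p * Pr p t l' (s + c) + (1 - p) * Pr p t l' s
  end.

Definition upd (m : nat -> R) (k : nat) (c : R) : nat -> R :=
  fun j => if j == k then m j + c else m j.

Fixpoint CS (b : nat) (F : (nat -> R) -> R) (l : seq R) (m : nat -> R) : R :=
  match l with
  | [::] => F m
  | c :: l' => \sum_(k < b) CS b F l' (upd m k c)
  end.

Lemma CS_ind b t l m k0 : (0 < b)%N -> (k0 < b)%N ->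
  CS b (fun m => ind t (m k0)) l m = (b%:R ^+ size l) * Pr (b%:R^-1) t l (m k0).
Proof.
move=> b0 kb; elim: l m => [|c l IH] m /=; first by rewrite expr0 mul1r.
under eq_bigr do rewrite IH.
rewrite (bigD1 (Ordinal kb)) //= {1}/upd eqxx.
rewrite (eq_bigr (fun _ => b%:R ^+ size l * Pr b%:R^-1 t l (m k0))); last first.
  by move=> k hk; rewrite /upd; case: eqP => // hk0; move: hk; rewrite -val_eqE /= hk0 eqxx.
rewrite sumr_const cardC1 card_ord -[_ *+ b.-1]mulr_natr.
have bR : (b%:R : R) != 0 by rewrite pnatr_eq0 -lt0n.
rewrite exprS; have -> : (b.-1%:R : R) = b%:R - 1 by rewrite -[in RHS](prednK b0) -natr1 addrK.
by field.
Qed.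

Lemma CS_sum b (F : 'I_b -> (nat -> R) -> R) l m :
  CS b (fun m => \sum_(k < b) F k m) l m = \sum_(k < b) CS b (F k) l m.
Proof.
elim: l m => [|c l IH] m //=.
under eq_bigr do rewrite IH.
by rewrite exchange_big.
Qed.

Lemma CS_cat b F l1 l2 m : CS b F (l1 ++ l2) m = CS b (CS b F l2) l1 m.
Proof. by elim: l1 m => [|c l IH] m //=; under eq_bigr do rewrite IH. Qed.

Lemma sum_upd b m k c : (k < b)%N -> \sum_(j < b) upd m k c j = \sum_(j < b) m j + c.
Proof.
move=> kb; rewrite (bigD1 (Ordinal kb)) //= [in RHS](bigD1 (Ordinal kb)) //=.
rewrite /upd eqxx (eq_bigr (fun j : 'I_b => m j)); first by rewrite addrAC.
move=> j hj; by case: eqP => // hk; move: hj; rewrite -val_eqE /= hk eqxx.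
Qed.

Lemma CS_le b (F : (nat -> R) -> R) (K : R) (l : seq R) (m : nat -> R) : (0 < b)%N -> 0 <= K ->
  (forall m' : nat -> R, (forall k, (k < b)%N -> 0 <= m' k) ->
     \sum_(k < b) m' k = \sum_(k < b) m k + \sum_(c <- l) c -> F m' <= K) ->
  (forall k, (k < b)%N -> 0 <= m k) -> all (fun c => 0 <= c) l ->
  CS b F l m <= b%:R ^+ size l * K.
Proof.
move=> b0 K0; elim: l m => [|c l IH] m /= HF hm.
  by move=> _; rewrite expr0 mul1r; apply: HF => //; rewrite big_nil addr0.
move=> /andP[c0 hl].
rewrite exprS -mulrA.
apply: (@le_trans _ _ (\sum_(k < b) (b%:R ^+ size l * K))); last by rewrite sumr_const card_ord mulr_natl.
apply: ler_sum => k _; apply: IH => //.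
- move=> m' hm' hs; apply: HF => //; rewrite hs sum_upd // big_cons addrA //.
- by move=> j jb; rewrite /upd; case: eqP => _; [apply: addr_ge0; [apply: hm|]|apply: hm].
Qed.

End Comb.
Section Core.
Context {R : realType}.

Lemma ind01 (t x : R) : 0 <= ind t x <= 1.
Proof. by rewrite /ind; case: ifP => _; rewrite ?lexx ?ler01. Qed.

Lemma Pr01 (p t : R) l s : 0 <= p <= 1 -> 0 <= Pr p t l s <= 1.
Proof.
move=> hp; elim: l s => [|c l IH] s /=; first exact: ind01.
have := IH (s + c); have := IH s; nra.
Qed.

Lemma Pr2_bnd (p t u v x : R) : 0 <= p <= 1 ->
  Pr p t [:: v; u] x <= (1 - (1 - p) ^+ 2) + (1 - p) ^+ 2 * ind t x.
Proof.
move=> hp /=; rewrite /ind.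
case: (t <= x + v + u); case: (t <= x + v); case: (t <= x + u); case: (t <= x); nra.
Qed.

Lemma Pr2_bnd2 (p t u v x : R) : 0 <= p <= 1 -> 0 <= v <= u -> x + u < t ->
  Pr p t [:: v; u] x <= p ^+ 2 + (1 - p ^+ 2) * ind t x.
Proof.
move=> hp hvu hx /=; rewrite /ind.
have -> : (t <= x + v) = false by apply/negbTE; rewrite -ltNge; lra.
have -> : (t <= x + u) = false by apply/negbTE; rewrite -ltNge; lra.
have -> : (t <= x) = false by apply/negbTE; rewrite -ltNge; lra.
case: (t <= x + v + u); nra.
Qed.

Lemma sum_affine b (a c : R) (f : 'I_b -> R) :
  \sum_(k < b) (a + c * f k) = b%:R * a + c * \sum_(k < b) f k.
Proof. by rewrite big_split /= sumr_const card_ord mulr_natl mulr_sumr. Qed.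

Lemma core b t u v (r : nat -> R) : (3 <= b)%N -> 0 < t -> 0 <= v -> v <= u ->
  (\sum_(k < b) r k + u < 3 * t \/ \sum_(k < b) r k < 2 * t) ->
  (forall k, (k < b)%N -> 0 <= r k) ->
  \sum_(k < b) Pr b%:R^-1 t [:: v; u] (r k) <= b%:R * (1 - (1 - b%:R^-1) ^+ 3).
Proof.
move=> b3 t0 v0 vu hR hr.
have bpos : (0 < b%:R :> R) by rewrite ltr0n (leq_trans _ b3).
have bge3 : (3 <= b%:R :> R) by rewrite (ler_nat R 3 b).
have bn0 : (b%:R :> R) != 0 by rewrite gt_eqF.
set p := (b%:R : R)^-1.
have pb : p * b%:R = 1 by rewrite mulVf.
have p0 : 0 < p by rewrite invr_gt0.
have p13 : p <= 1/3 by nra.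
have hp : 0 <= p <= 1 by apply/andP; split; lra.
have E2 : b%:R * (1 - (1 - p) ^+ 2) = 2 - p by rewrite /p; field.
have E3 : b%:R * (1 - (1 - p) ^+ 3) = 3 - 3 * p + p ^+ 2 by rewrite /p; field.
have Ep : b%:R * p ^+ 2 = p by rewrite /p; field.
rewrite E3.
set R0 := \sum_(k < b) r k in hR *.
set h := \sum_(k < b) ind t (r k).
have hA : forall k : 'I_b, r k + t * (h - ind t (r k)) <= R0.
  move=> k; rewrite /R0 /h (bigD1 k) //= [in X in _ <= X](bigD1 k) //= addrAC subrr add0r.
  rewrite lerD2l mulr_sumr; apply: ler_sum => j _; rewrite /ind; case: ifP => hj.
    by rewrite mulr1.
  by rewrite mulr0 hr.
have hh : t * h <= R0.
  rewrite /h /R0 mulr_sumr; apply: ler_sum => j _; rewrite /ind; case: ifP => hj.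
    by rewrite mulr1.
  by rewrite mulr0 hr.
pose f := fun k : 'I_b => nat_of_bool (t <= r k).
have hE : h = ((\sum_(k < b) f k)%N)%:R.
  by rewrite natr_sum; apply: eq_bigr => k _; rewrite /ind /f; case: (t <= r k).
case: (leqP (\sum_(k < b) f k)%N 1) => hn.
  have h1 : h <= 1 by rewrite hE (ler_nat R _ 1).
  apply: (@le_trans _ _ (\sum_(k < b) ((1 - (1 - p) ^+ 2) + (1 - p) ^+ 2 * ind t (r k)))).
    by apply: ler_sum => k _; exact: Pr2_bnd.
  rewrite sum_affine E2 -/h.
  have : 0 <= (1 - p) ^+ 2 by apply: sqr_ge0.
  nra.
have h2 : 2 <= h by rewrite hE (ler_nat R 2).
have hR' : R0 + u < 3 * t by case: hR => //; nra.
have h2' : h <= 2.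
  rewrite hE (ler_nat R _ 2) leqNgt; apply/negP => h3.
  have : 3 <= h by rewrite hE (ler_nat R 3).
  nra.
apply: (@le_trans _ _ (\sum_(k < b) (p ^+ 2 + (1 - p ^+ 2) * ind t (r k)))).
  apply: ler_sum => k _; case: (boolP (t <= r k)) => hk.
    have := Pr01 p t [:: v; u] (r k) hp; rewrite /ind hk; nra.
  apply: Pr2_bnd2 => //; first by apply/andP.
  have := hA k; rewrite /ind (negbTE hk) subr0; nra.
rewrite sum_affine Ep -/h.
have : 0 <= 1 - p ^+ 2 by nra.
nra.
Qed.

End Core.
Section CombMain.
Context {R : realType}.

Lemma comb_main b t (rest : seq R) u v : (3 <= b)%N -> 0 < t -> 0 <= v -> v <= u ->
  all (fun c => 0 <= c) rest ->
  (\sum_(c <- rest) c + u < 3 * t \/ \sum_(c <- rest) c < 2 * t) ->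
  Pr b%:R^-1 t (rest ++ [:: v; u]) 0 <= 1 - (1 - b%:R^-1) ^+ 3.
Proof.
move=> b3 t0 v0 vu hrest hR.
have b0 : (0 < b)%N by rewrite (leq_trans _ b3).
have bpos : (0 < b%:R :> R) by rewrite ltr0n.
have bge3 : (3 <= b%:R :> R) by rewrite (ler_nat R 3 b).
have p0 : 0 < (b%:R : R)^-1 by rewrite invr_gt0.
have p1 : (b%:R : R)^-1 <= 1 by rewrite invf_le1 //; lra.
have B0 : 0 <= 1 - (1 - (b%:R : R)^-1) ^+ 3.
  rewrite subr_ge0 exprn_ile1 //; lra.
set L := rest ++ [:: v; u].
pose H := fun m : nat -> R => \sum_(k < b) ind t (m k).
have E1 : CS b H L (fun _ => 0) = b%:R * (b%:R ^+ size L * Pr b%:R^-1 t L 0).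
  rewrite /H CS_sum.
  under eq_bigr => k _ do rewrite (@CS_ind R b t _ _ k b0 (ltn_ord k)).
  by rewrite sumr_const card_ord mulr_natl.
have E2 : CS b H L (fun _ => 0) = CS b (CS b H [:: v; u]) rest (fun _ => 0)
  by rewrite CS_cat.
have E3 : forall m, CS b H [:: v; u] m =
    \sum_(k < b) (b%:R ^+ 2 * Pr b%:R^-1 t [:: v; u] (m k)).
  by move=> m; rewrite /H CS_sum; apply: eq_bigr => k _; rewrite (@CS_ind R b t _ _ k b0 (ltn_ord k)).
have Hle : CS b (CS b H [:: v; u]) rest (fun _ => 0) <=
    b%:R ^+ size rest * (b%:R ^+ 2 * (b%:R * (1 - (1 - b%:R^-1) ^+ 3))).
  apply: CS_le => //.
  - by apply: mulr_ge0; [apply: exprn_ge0; lra|apply: mulr_ge0 => //; lra].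
  - move=> m' hm' hs; rewrite E3 -mulr_sumr; apply: ler_wpM2l.
      by apply: exprn_ge0; lra.
    rewrite big1_eq add0r in hs.
    by apply: core => //; rewrite hs.
move: Hle; rewrite -E2 E1 /L size_cat /= exprD => Hle.
have X0 : 0 < b%:R * (b%:R ^+ size rest * b%:R ^+ 2) :> R.
  by apply: mulr_gt0 => //; apply: mulr_gt0; apply: exprn_gt0.
rewrite -(ler_pM2l X0).
set P0 := Pr _ _ _ _ in Hle *; set B := 1 - _ in Hle *.
have -> : b%:R * (b%:R ^+ size rest * b%:R ^+ 2) * P0 =
  b%:R * (b%:R ^+ size rest * b%:R ^+ 2 * P0) by ring.
have -> : b%:R * (b%:R ^+ size rest * b%:R ^+ 2) * B =
  b%:R ^+ size rest * (b%:R ^+ 2 * (b%:R * B)) by ring.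
exact: Hle.
Qed.

End CombMain.
Section Meas.
Context d (T : measurableType d) (R : realType) (P : probability T R)
  (beta : nat -> T -> R) (p : R).

Definition cyl (l0 : seq nat) (e : nat -> bool) : set T :=
  [set w | forall i, i \in l0 -> beta i w = (e i)%:R].

Lemma cyl_meas (hm : forall i, measurable_fun setT (beta i)) l0 e :
  measurable (cyl l0 e).
Proof.
elim: l0 => [|i l0 IH].
  rewrite (_ : cyl [::] e = setT); first exact: measurableT.
  by apply/seteqP; split => w //= _ j; rewrite in_nil.
rewrite (_ : cyl (i :: l0) e = (setT `&` beta i @^-1` [set (e i)%:R]) `&` cyl l0 e).
  apply: measurableI => //; apply: hm => //; exact: measurable_set1.
apply/seteqP; split => w /=.
  move=> h; split; first by split=> //; apply: h; exact: mem_head.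
  by move=> j hj; apply: h; rewrite in_cons hj orbT.
move=> [[_ hi] h] j; rewrite in_cons => /orP[/eqP -> //|]; exact: h.
Qed.

Lemma link (hiid : iid_bernoulli P beta p) (c : nat -> R) (t : R)
  (l l0 : seq nat) (e : nat -> bool) (s : R) :
  uniq (l0 ++ l) ->
  measurable (cyl l0 e `&` [set w | t <= s + \sum_(i <- l) c i * beta i w]) /\
  P (cyl l0 e `&` [set w | t <= s + \sum_(i <- l) c i * beta i w]) =
    ((\prod_(i <- l0) (if e i then p else 1 - p)) * Pr p t (map c l) s)%:E.
Proof.
case: hiid => hm [h01 hprod].
elim: l l0 e s => [|i l IH] l0 e s hu.
  rewrite cats0 in hu.
  rewrite /= /ind; case: ifP => hts.
    rewrite (_ : _ `&` _ = cyl l0 e); last first.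
      by apply/seteqP; split => w /=; [case|move=> h; split => //; rewrite big_nil addr0].
    by rewrite mulr1; split; [exact: cyl_meas|exact: hprod].
  rewrite (_ : _ `&` _ = set0); last first.
    by apply/seteqP; split => w //=; rewrite big_nil addr0 hts; case.
  by rewrite mulr0 measure0; split.
have hi : i \notin l0.
  by move: hu; rewrite cat_uniq => /and3P[_ /hasPn /(_ i (mem_head _ _)) ->].
have hu' : uniq ((i :: l0) ++ l).
  have hp : perm_eq (l0 ++ i :: l) (i :: l0 ++ l) by rewrite -cat1s perm_catCA.
  by change (uniq (i :: l0 ++ l)); rewrite -(perm_uniq hp).
pose e1 := fun j => if j == i then true else e j.
pose e0 := fun j => if j == i then false else e j.
have [m1 P1] := IH (i :: l0) e1 (s + c i) hu'.
have [m0 P0] := IH (i :: l0) e0 s hu'.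
have hne : forall j, j \in l0 -> (j == i) = false.
  by move=> j hj; apply/eqP => hji; move: hi; rewrite -hji hj.
have E : cyl l0 e `&` [set w | t <= s + \sum_(j <- i :: l) c j * beta j w] =
  (cyl (i :: l0) e1 `&` [set w | t <= (s + c i) + \sum_(j <- l) c j * beta j w]) `|`
  (cyl (i :: l0) e0 `&` [set w | t <= s + \sum_(j <- l) c j * beta j w]).
  apply/seteqP; split => w /=.
    move=> [hc]; rewrite big_cons; case: (h01 i w) => hb; rewrite hb ?mulr0 ?mulr1 ?add0r => ht.
      right; split => // j; rewrite in_cons => /orP[/eqP ->|hj]; first by rewrite /e0 eqxx hb.
      by rewrite /e0 hne //; exact: hc.
    left; split; last by rewrite -addrA.
    move=> j; rewrite in_cons => /orP[/eqP ->|hj]; first by rewrite /e1 eqxx hb.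
    by rewrite /e1 hne //; exact: hc.
  move=> [[hc ht]|[hc ht]]; split.
  - by move=> j hj; have := hc j; rewrite in_cons hj orbT /e1 hne //; apply.
  - by rewrite big_cons; have := hc i (mem_head _ _); rewrite /e1 eqxx => ->; rewrite mulr1 addrA.
  - by move=> j hj; have := hc j; rewrite in_cons hj orbT /e0 hne //; apply.
  - by rewrite big_cons; have := hc i (mem_head _ _); rewrite /e0 eqxx => ->; rewrite mulr0 add0r.
have D : (cyl (i :: l0) e1 `&` [set w | t <= (s + c i) + \sum_(j <- l) c j * beta j w]) `&`
  (cyl (i :: l0) e0 `&` [set w | t <= s + \sum_(j <- l) c j * beta j w]) = set0.
  apply/seteqP; split => w //= [[h1 _] [h0 _]].
  have := h1 i (mem_head _ _); rewrite (h0 i (mem_head _ _)) /e1 /e0 eqxx /=.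
  by move/eqP; rewrite eq_sym oner_eq0.
rewrite E; split; first exact: measurableU.
set A1 := cyl (i :: l0) e1 `&` _ in m1 P1 D *.
set A0 := cyl (i :: l0) e0 `&` _ in m0 P0 D *.
have -> : P (A1 `|` A0) = P A1 + P A0 by apply: measureU.
rewrite P1 P0 -EFinD; congr (_%:E).
rewrite !big_cons /e1 /e0 eqxx /=.
rewrite (eq_big_seq (fun j => if e j then p else 1 - p)); last by move=> j hj; rewrite hne.
rewrite [X in _ + (1 - p) * X * _](eq_big_seq (fun j => if e j then p else 1 - p)); last first.
  by move=> j hj; rewrite hne.
ring.
Qed.

End Meas.
Section Gen.
Context {R : realType}.

Lemma ind_ge (t s : R) : t <= s -> ind t s = 1.
Proof. by rewrite /ind => ->. Qed.
Lemma ind_lt (t s : R) : s < t -> ind t s = 0.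
Proof. by rewrite /ind ltNge => /negbTE ->. Qed.

Lemma ser_split (u : nat -> R) {n m : nat} : (n <= m)%N ->
  series u m = series u n + \sum_(n <= k < m) u k.
Proof. by move=> nm; rewrite /series /= (@big_cat_nat _ _ _ n 0 m _ _ (leq0n n) nm). Qed.

End Gen.

Section Main.
Context d (T : measurableType d) (R : realType) (P : probability T R)
  (beta : nat -> T -> R).

Lemma bold_S w : S_gamma (@bold_third R) beta w =
  \sum_(i <- iota 0 3) bold_third R i * beta i w.
Proof.
rewrite /S_gamma; apply: lim_near_cst => //; exists 3%N => // n /= hn.
rewrite (@ser_split R _ 3 n hn) big_nat_cond big1 ?addr0 //.
move=> k /andP[/andP[hk _] _]; rewrite /bold_third ltnNge hk /=; exact: mul0r.
Qed.

Lemma bold_val (p : R) : iid_bernoulli P beta p ->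
  fine (P [set w | 3^-1 <= S_gamma (@bold_third R) beta w]) = 1 - (1 - p) ^+ 3.
Proof.
move=> hiid.
have [_ hP] := @link _ _ _ P beta p hiid (@bold_third R) (3^-1) (iota 0 3) [::] (fun _ => false) 0 erefl.
rewrite (_ : [set w | _] = cyl d T R beta [::] (fun _ => false) `&`
   [set w | 3^-1 <= 0 + \sum_(i <- iota 0 3) bold_third R i * beta i w]); last first.
  apply/seteqP; split => w /=; rewrite bold_S add0r //; by case.
rewrite hP /= big_nil mul1r /bold_third /=.
have h3 : (0 : R) < 3^-1 by rewrite invr_gt0 ltr0n.
rewrite (@ind_lt R 3^-1 0 h3) !ind_ge; try lra.
all: ring.
Qed.

End Main.
Section Upper.
Context d (T : measurableType d) (R : realType) (P : probability T R)
  (beta : nat -> T -> R).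

Lemma upper (b : nat) : (3 <= b)%N -> iid_bernoulli P beta (b%:R^-1) ->
  forall c, stake_seq c ->
  fine (P [set w | 3^-1 <= S_gamma c beta w]) <= 1 - (1 - b%:R^-1) ^+ 3.
Proof.
move=> hb hiid c [c0 [cdec cc1]].
have hiid' := hiid; case: hiid' => hm [h01 _].
have cmono : forall i j, (i <= j)%N -> c j <= c i.
  move=> i j /subnK <-; elim: (j - i)%N => [|k IH]; first by rewrite add0n.
  by rewrite addSn; exact: le_trans (cdec _) IH.
have sc_nd : forall n m, (n <= m)%N -> series c n <= series c m.
  move=> n m nm; rewrite (ser_split _ nm) lerDl; apply: sumr_ge0 => k _; exact: c0.
have L1 : limn (series c) = 1 by apply/cvg_lim.
have sc_le1 : forall n, series c n <= 1.
  by move=> n; have := nondecreasing_cvgn_le sc_nd (cvgP _ cc1) n; rewrite L1.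
pose f w := series (fun i => c i * beta i w).
have fb : forall w i, 0 <= c i * beta i w <= c i.
  move=> w i; case: (h01 i w) => ->; rewrite ?mulr0 ?mulr1 lexx ?c0 //.
have f_cvg : forall w, cvgn (f w).
  move=> w; apply: nondecreasing_is_cvgn.
    move=> n m nm; rewrite /f (ser_split _ nm) lerDl; apply: sumr_ge0 => k _.
    by case/andP: (fb w k).
  exists 1 => _ [n _ <-]; apply: le_trans (sc_le1 n); rewrite /f /series /=.
  by apply: ler_sum => k _; case/andP: (fb w k).
have S_le : forall w n, S_gamma c beta w <= f w n + (1 - series c n).
  move=> w n; change (limn (f w) <= f w n + (1 - series c n)).
  apply: limr_le; first exact: f_cvg.
  exists n => // m /= nm.
  rewrite /f (ser_split (fun i => c i * beta i w) nm).
  have : \sum_(n <= k < m) c k * beta k w <= \sum_(n <= k < m) c k.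
    by apply: ler_sum => k _; case/andP: (fb w k).
  have := sc_le1 m; rewrite (ser_split c nm); lra.
have S_meas : measurable_fun setT (S_gamma c beta).
  apply: (@measurable_realfun.measurable_fun_cvg _ _ _ _ (fun m w => f w m)).
    move=> m; rewrite /f /series /=; apply: measurable_sum => i.
    exact: (measurable_realfun.measurable_funM (measurable_cst _) (hm i)).
  by move=> w _; exact: (f_cvg w).
have E_meas : measurable [set w | 3^-1 <= S_gamma c beta w].
  by have := S_meas measurableT _ (measurable_itv `[3^-1, +oo[); rewrite setTI preimage_itvcy.
have hN : forall eps, 0 < eps -> exists N, forall n, (N <= n)%N -> 1 - series c n < eps.
  move=> eps he; have [N _ HN] := (cvgrPdist_lt _ _).1 cc1 eps he.
  exists N => n hn; have := HN n hn; rewrite /=; apply: le_lt_trans; exact: ler_norm.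
have [N1 HN1] := hN 6^-1 ltac:(by rewrite invr_gt0 ltr0n).
have [N [hN1 hN2]] : exists N, 1 - series c N.+2 < 6^-1 /\
    (0 < c 1%N -> 1 - series c N.+2 < c 1%N / 2).
  case: (boolP (0 < c 1%N)) => hc1.
    have [N2 HN2] := hN (c 1%N / 2) ltac:(by rewrite divr_gt0).
    exists (maxn N1 N2); split.
      by apply: HN1; rewrite leqW // leqW // leq_maxl.
    by move=> _; apply: HN2; rewrite leqW // leqW // leq_maxr.
  exists N1; split; last by move=> h; case/negP: hc1.
  by apply: HN1; rewrite leqW // leqW.
set s := series c N.+2 in hN1 hN2 *.
set TT := 1 - s.
set t := 3^-1 - TT.
have TT0 : 0 <= TT by rewrite /TT subr_ge0; exact: sc_le1.
have decc : s = c 0%N + c 1%N + \sum_(i <- iota 2 N) c i.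
  by rewrite /s /series /= /index_iota subn0 /= !big_cons addrA.
have decf : forall w, f w N.+2 = \sum_(i <- iota 2 N ++ [:: 1%N; 0%N]) c i * beta i w.
  move=> w; rewrite /f /series /= /index_iota subn0 /= !big_cons big_cat /= !big_cons big_nil.
  ring.
have hu : uniq ([::] ++ (iota 2 N ++ [:: 1%N; 0%N])).
  by rewrite cat0s cat_uniq iota_uniq /= !mem_iota.
have [mA PA] := @link _ _ _ P beta _ hiid c t (iota 2 N ++ [:: 1%N; 0%N]) [::] (fun _ => false) 0 hu.
have sub : [set w | 3^-1 <= S_gamma c beta w] `<=` cyl d T R beta [::] (fun _ => false) `&`
    [set w | t <= 0 + \sum_(i <- iota 2 N ++ [:: 1%N; 0%N]) c i * beta i w].
  move=> w /= hS; split; first by move=> i; rewrite in_nil.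
  have := S_le w N.+2; rewrite decf -/s /t /TT; lra.
set E := [set w | 3^-1 <= S_gamma c beta w] in E_meas sub *.
set A := cyl d T R beta [::] (fun _ => false) `&` _ in mA PA sub.
have hle : (P E <= P A)%E by apply: le_measure => //; rewrite inE.
rewrite PA /= big_nil mul1r in hle.
have fE : P E = (fine (P E))%:E.
  by rewrite fineK //; exact: fin_num_measure.
move: hle; rewrite fE lee_fin => hle; apply: le_trans hle _.
rewrite map_cat /=; apply: comb_main => //.
- by rewrite /t /TT; lra.
- by apply/allP => x /mapP[i _ ->].
rewrite big_map.
set S := \sum_(j <- iota 2 N) c j in decc *.
case: (boolP (0 < c 1%N)) => hc1.
  left; have := hN2 hc1; move: decc; rewrite /t /TT; lra.
right; have c10 : c 1%N = 0 by apply/le_anti; rewrite c0 andbT leNgt.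
rewrite /S big1_seq; first by rewrite /t /TT; lra.
move=> i /andP[_]; rewrite mem_iota => /andP[hi _].
by apply/le_anti; rewrite c0 andbT -c10; apply: cmono; apply: ltnW.
Qed.

End Upper.
Lemma bold_stake (R : realType) : stake_seq (@bold_third R).
Proof.
have h3 : (0 : R) < 3^-1 by rewrite invr_gt0 ltr0n.
split; first by move=> i; rewrite /bold_third; case: ifP => _; rewrite ?lexx // ltW.
split.
  move=> i; rewrite /bold_third; case: ifP => hi.
    by rewrite (ltn_trans (ltnSn i) hi) lexx.
  by case: ifP => _; rewrite ?lexx // ltW.
apply: cvg_near_cst; exists 3%N => // n /= hn.
rewrite (@ser_split R _ 3 n hn) big_nat_cond big1 ?addr0.
  rewrite /series /= /index_iota /= !big_cons big_nil /bold_third /=; lra.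
move=> k /andP[/andP[hk _] _]; rewrite /bold_third ltnNge hk //.
Qed.

Theorem proposition20 (d : measure_display) (T : measurableType d)
  (R : realType) (P : probability T R) (beta : nat -> T -> R) (b : nat) :
  (3 <= b)%N ->
  iid_bernoulli P beta (b%:R^-1) ->
  pi_val P beta 3^-1 = 1 - (1 - b%:R^-1) ^+ 3 /\
  fine (P [set w | 3^-1 <= S_gamma (@bold_third R) beta w])
    = 1 - (1 - b%:R^-1) ^+ 3.
Proof.
move=> hb hiid.
have hbold := @bold_val _ _ _ P beta _ hiid.
split => //.
rewrite /pi_val; apply/eqP; rewrite eq_le; apply/andP; split.
  apply: ge_sup.
    by exists (1 - (1 - b%:R^-1) ^+ 3); exists (@bold_third R); split; [exact: bold_stake|].
  by move=> r [c [hc ->]]; exact: (@upper _ _ _ P beta b hb hiid c hc).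
apply: sup_upper_bound.
  split.
    by exists (1 - (1 - b%:R^-1) ^+ 3); exists (@bold_third R); split; [exact: bold_stake|].
  by exists (1 - (1 - b%:R^-1) ^+ 3) => r [c [hc ->]]; exact: (@upper _ _ _ P beta b hb hiid c hc).
by exists (@bold_third R); split; [exact: bold_stake|].
Qed.
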